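(* Let $\mathbf{A}\in\mathbb{R}^{M\times N}$, $\mathbf{Y}\in\mathbb{R}^{M\times L}$, and let $(\mathbf{g}(t),\mathbf{V}(t))$, $t\ge0$, evolve under the continuous gradient flow of $\mathcal{L}(\mathbf{g},\mathbf{V})=\Vert\mathbf{Y}-\mathbf{A}((\mathbf{g}^{\odot 2}\mathbf{1}_L)\odot\mathbf{V})\Vert_F^2$. Fix $i\in[N]$ and write $\mathbf{V}_{i:}(t)$ for the $i$-th row of $\mathbf{V}(t)$. Case I: if $\frac{1}{\sqrt2}|g_i(0)|=\Vert\mathbf{V}_{i:}(0)\Vert=0$, then $\frac{1}{\sqrt2}|g_i(t)|=\Vert\mathbf{V}_{i:}(t)\Vert=0$ for all $t>0$. Case II: if $\frac{1}{\sqrt2}|g_i(0)|=\Vert\mathbf{V}_{i:}(0)\Vert>0$, then $\frac{1}{\sqrt2}|g_i(t)|=\Vert\mathbf{V}_{i:}(t)\Vert>0$ for all $t>0$.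
   Context: $\odot$ is the entrywise product, $\mathbf{1}_L$ the $1\times L$ all-ones row vector, so the estimate has entries $g_i^2V_{ij}$; $\Vert\cdot\Vert$ on a row is the Euclidean norm. Gradient flow: $\frac{d}{dt}g_l=-\partial\mathcal{L}/\partial g_l$, $\frac{d}{dt}V_{lm}=-\partial\mathcal{L}/\partial V_{lm}$ along the curve. *)

(* Defs.v *)
From HB Require Import structures.
From mathcomp Require Import all_boot all_order all_algebra.
From mathcomp Require Import all_classical all_reals all_analysis.
Set Implicit Arguments. Unset Strict Implicit. Unset Printing Implicit Defensive.
Import Order.TTheory GRing.Theory Num.Theory.
Local Open Scope classical_set_scope.
Local Open Scope ring_scope.
Import numFieldNormedType.Exports.

Section Defs.
Variables (R : realType) (M N L : nat).

(* the estimate (g^{o2} 1_L) o V : entries g_i^2 V_ij *)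
Definition estim (g : 'I_N -> R) (V : 'M[R]_(N, L)) : 'M[R]_(N, L) :=
  \matrix_(i, j) (g i ^+ 2 * V i j).

Definition loss (A : 'M[R]_(M, N)) (Y : 'M[R]_(M, L))
    (g : 'I_N -> R) (V : 'M[R]_(N, L)) : R :=
  \sum_(m < M) \sum_(l < L) (Y m l - (A *m estim g V) m l) ^+ 2.

Definition dL_dg A Y (g : 'I_N -> R) V (k : 'I_N) : R :=
  derive1 (fun s : R => loss A Y (fun j => g j + (if j == k then s else 0)) V) 0.

Definition dL_dV A Y (g : 'I_N -> R) (V : 'M[R]_(N, L)) (k : 'I_N) (l : 'I_L) : R :=
  derive1 (fun s : R => loss A Y g (V + s *: delta_mx k l)) 0.

Definition rownorm (V : 'M[R]_(N, L)) (i : 'I_N) : R :=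
  Num.sqrt (\sum_(j < L) V i j ^+ 2).

Definition grad_flow A Y (g : R -> 'I_N -> R) (V : R -> 'M[R]_(N, L)) : Prop :=
  (forall t : R, 0 < t ->
     (forall k, is_derive t 1 (fun s => g s k) (- dL_dg A Y (g t) (V t) k)) /\
     (forall k l, is_derive t 1 (fun s => V s k l) (- dL_dV A Y (g t) (V t) k l))) /\
  (forall k, (fun s => g s k) x @[x --> 0^'+] --> g 0 k) /\
  (forall k l, (fun s => V s k l) x @[x --> 0^'+] --> V 0 k l).

End Defs.

(* Main.v *)
Require Import Defs.
From HB Require Import structures.
From mathcomp Require Import all_boot all_order all_algebra.
From mathcomp Require Import all_classical all_reals all_analysis.
From mathcomp Require Import ring lra.
Import Order.TTheory GRing.Theory Num.Theory.
Local Open Scope ring_scope.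
Set Implicit Arguments. Unset Strict Implicit. Unset Printing Implicit Defensive.
Import numFieldNormedType.Exports.
Local Open Scope classical_set_scope.
Local Open Scope ring_scope.

Section Helpers.
Variables (R : realType) (M N L : nat) (A : 'M[R]_(M, N)) (Y : 'M[R]_(M, L)).

Definition res (g : 'I_N -> R) (V : 'M[R]_(N, L)) m l :=
  Y m l - (A *m estim g V) m l.

Lemma estimE (g : 'I_N -> R) (V : 'M[R]_(N, L)) i j : estim g V i j = g i ^+ 2 * V i j.
Proof. by rewrite /estim mxE. Qed.

Lemma loss_quad g V g' V' (b : 'I_M -> 'I_L -> R) (p : R) :
  (forall m l, (A *m estim g' V') m l = (A *m estim g V) m l + b m l * p) ->
  loss A Y g' V' = loss A Y g V
     - 2 * (\sum_(m < M) \sum_(l < L) res g V m l * b m l) * p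
     + (\sum_(m < M) \sum_(l < L) b m l ^+ 2) * p ^+ 2.
Proof.
move=> H; rewrite /loss mulr_sumr mulr_suml mulr_suml -sumrB -big_split /=.
apply: eq_bigr => m _.
rewrite mulr_sumr !mulr_suml -sumrB -big_split /=. apply: eq_bigr => l _.
rewrite H /res /=; ring.
Qed.

Lemma dLg g V k : dL_dg A Y g V k =
  - 4 * g k * (\sum_(m < M) \sum_(l < L) res g V m l * (A m k * V k l)).
Proof.
rewrite /dL_dg.
set C0 := loss A Y g V.
set C1 := \sum_(m < M) _.
set C2 := \sum_(m < M) \sum_(l < L) (A m k * V k l) ^+ 2.
have -> : (fun s => loss A Y (fun j => g j + (if j == k then s else 0)) V) =
   (fun s => C0 - 2 * C1 * ((g k + s) ^+ 2 - g k ^+ 2) + C2 * ((g k + s) ^+ 2 - g k ^+ 2) ^+ 2).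
  apply/funext => s; apply: loss_quad => m l.
  rewrite !mxE (bigD1 k) //= [X in _ = X + _](bigD1 k) //=.
  rewrite (eq_bigr (fun j => A m j * estim g V j l)); last first.
    by move=> j /negbTE jk; rewrite !estimE jk addr0.
  rewrite !estimE eqxx /=; ring.
rewrite derive1E.
apply: derive_val.
apply: is_derive_eq.
rewrite addr0 subrr !scale0r !addr0 add0r mulr1 !mul1r.
rewrite scaler0 addr0 subr0.
rewrite [X in - X = _](_ : _ = 2 * C1 * (g k * 1 + g k * 1)) //; ring.
Qed.

Lemma dLV g V k l0 : dL_dV A Y g V k l0 =
  - 2 * g k ^+ 2 * (\sum_(m < M) res g V m l0 * A m k).
Proof.
rewrite /dL_dV.
set C0 := loss A Y g V.
set C1 := \sum_(m < M) \sum_(l < L) res g V m l * (A m k * g k ^+ 2 * (l == l0)%:R).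
set C2 := \sum_(m < M) \sum_(l < L) (A m k * g k ^+ 2 * (l == l0)%:R) ^+ 2.
have -> : (fun s => loss A Y g (V + s *: delta_mx k l0)) =
   (fun s => C0 - 2 * C1 * s + C2 * s ^+ 2).
  apply/funext => s; apply: loss_quad => m l.
  rewrite !mxE (bigD1 k) //= [X in _ = X + _](bigD1 k) //=.
  rewrite (eq_bigr (fun j => A m j * estim g V j l)); last first.
    by move=> j /negbTE jk; rewrite !estimE !mxE jk /= mulr0 addr0.
  rewrite !estimE !mxE eqxx /=; case: (l == l0) => /=; ring.
rewrite derive1E; apply: derive_val; apply: is_derive_eq.
rewrite !add0r scale0r addr0 scaler0 addr0 mul1r.
rewrite [X in - X = _](_ : _ = 2 * C1 * 1) // mulr1.
suff -> : C1 = g k ^+ 2 * \sum_(m < M) res g V m l0 * A m k by rewrite /=; ring.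
rewrite /C1 mulr_sumr; apply: eq_bigr => m _.
rewrite (bigD1 l0) //= big1 ?eqxx ?addr0 /=; first ring.
by move=> l /negbTE ->; rewrite mulr0 mulr0.
Qed.

Lemma cvg_bsum (T : Type) (F : set_system T) (FF : Filter F) (I : Type)
  (r : seq I) (P : pred I) (f : I -> T -> R) (a : I -> R) :
  (forall j, f j x @[x --> F] --> a j) ->
  (\sum_(j <- r | P j) f j x) @[x --> F] --> \sum_(j <- r | P j) a j.
Proof.
move=> H; elim: r => [|b r IH].
  have -> : (fun x => \sum_(j <- [::] | P j) f j x) = (fun=> 0).
    by apply/funext => x; rewrite big_nil.
  by rewrite big_nil; exact: cvg_cst.
case Pb: (P b).
  have -> : (fun x => \sum_(j <- b :: r | P j) f j x) =
     (fun x => f b x + \sum_(j <- r | P j) f j x).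
    by apply/funext => x; rewrite big_cons Pb.
  by rewrite big_cons Pb; apply: cvgD.
have -> : (fun x => \sum_(j <- b :: r | P j) f j x) =
   (fun x => \sum_(j <- r | P j) f j x).
  by apply/funext => x; rewrite big_cons Pb.
by rewrite big_cons Pb.
Qed.

Section Traj.
Variables (g : R -> 'I_N -> R) (V : R -> 'M[R]_(N, L)) (i : 'I_N).

Definition C1 s := \sum_(m < M) \sum_(l < L) res (g s) (V s) m l * (A m i * V s i l).
Definition hc s := g s i ^+ 2 - 2 * \sum_(l < L) V s i l ^+ 2.

Section Lim.
Variables (F : set_system R) (FF : Filter F) (s0 : R).
Hypothesis Hg : forall k, g x k @[x --> F] --> g s0 k.
Hypothesis HV : forall k l, V x k l @[x --> F] --> V s0 k l.

Lemma cvg_res m l : res (g x) (V x) m l @[x --> F] --> res (g s0) (V s0) m l.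
Proof.
have E : forall s, res (g s) (V s) m l =
   Y m l - \sum_(n < N) A m n * (g s n * g s n * V s n l).
  by move=> s; rewrite /res mxE; congr (_ - _); apply: eq_bigr => n _; rewrite estimE expr2.
rewrite E; under eq_fun do rewrite E.
apply: cvgB; first exact: cvg_cst.
apply: cvg_bsum => n; apply: cvgM; first exact: cvg_cst.
by apply: cvgM; [apply: cvgM|].
Qed.

Lemma cvg_C1 : C1 x @[x --> F] --> C1 s0.
Proof.
apply: cvg_bsum => m; apply: cvg_bsum => l.
apply: cvgM; first exact: cvg_res.
by apply: cvgM; [exact: cvg_cst|].
Qed.

Lemma cvg_hc : hc x @[x --> F] --> hc s0.
Proof.
rewrite /hc; under eq_fun do rewrite !expr2.
rewrite !expr2.
apply: cvgB; first by apply: cvgM.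
apply: cvgM; first exact: cvg_cst.
by apply: cvg_bsum => l; apply: cvgM.
Qed.

Lemma cvg_gsq : g x i ^+ 2 @[x --> F] --> g s0 i ^+ 2.
Proof. by under eq_fun do rewrite expr2; rewrite expr2; apply: cvgM. Qed.

End Lim.

Lemma sE (a b : R) : a *: b = a * b. Proof. by []. Qed.

Section Flow.
Hypothesis Hf : grad_flow A Y g V.

Definition Sv s l := \sum_(m < M) res (g s) (V s) m l * A m i.

Lemma dg (t : R) : 0 < t -> is_derive t 1 (fun s => g s i) (4 * g t i * C1 t).
Proof.
move=> ht; have := (Hf.1 t ht).1 i; rewrite dLg => H.
apply: is_derive_eq; rewrite /C1; ring.
Qed.

Lemma dV (t : R) l : 0 < t -> is_derive t 1 (fun s => V s i l) (2 * g t i ^+ 2 * Sv t l).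
Proof.
move=> ht; have := (Hf.1 t ht).2 i l; rewrite dLV => H.
apply: is_derive_eq; rewrite /Sv; ring.
Qed.

Lemma C1E (t : R) : C1 t = \sum_(l < L) V t i l * Sv t l.
Proof.
rewrite /C1 /Sv exchange_big /=; apply: eq_bigr => l _.
by rewrite mulr_sumr; apply: eq_bigr => m _; ring.
Qed.

Lemma dh (t : R) : 0 < t -> is_derive t 1 (hc) 0.
Proof.
move=> ht.
have H := is_deriveB (is_deriveM (dg ht) (dg ht))
   (is_deriveZ 2 (is_derive_sum (fun l => is_deriveM (dV l ht) (dV l ht)))).
have -> : hc = ((fun s => g s i) * (fun s => g s i) - 2 \*: \sum_(l < L) ((fun s => V s i l) * (fun s => V s i l))).
  apply/funext => s; rewrite /hc /= fct_sumE !expr2 //.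
apply: is_derive_eq.
rewrite ?sE C1E /=.
set S := \sum_(l < L) V t i l * Sv t l.
have E : \sum_(l < L) (V t i l *: (2 * g t i ^+ 2 * Sv t l) + V t i l *: (2 * g t i ^+ 2 * Sv t l)) = 4 * g t i ^+ 2 * S.
  by rewrite /S mulr_sumr; apply: eq_bigr => l _; rewrite !sE; ring.
rewrite E; ring.
Qed.

Lemma cont_at (x : R) : 0 < x ->
  (forall k, g s k @[s --> x] --> g x k) /\ (forall k l, V s k l @[s --> x] --> V x k l).
Proof.
move=> hx; split.
  move=> k; have H := (Hf.1 x hx).1 k.
  apply: differentiable_continuous; apply/derivable1_diffP.
  exact: ex_derive.
move=> k l; have H := (Hf.1 x hx).2 k l.
apply: differentiable_continuous; apply/derivable1_diffP.
exact: ex_derive.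
Qed.

Lemma within0t (phi : R -> R) (t : R) : 0 < t ->
  (forall (F : set_system R) (s0 : R), Filter F -> x @[x --> F] --> s0 ->
     (forall k, g x k @[x --> F] --> g s0 k) ->
     (forall k l, V x k l @[x --> F] --> V s0 k l) ->
     phi x @[x --> F] --> phi s0) ->
  {within `[0, t], continuous phi}.
Proof.
move=> ht H; apply/continuous_within_itvP => //; split.
- move=> x; rewrite in_itv /= => /andP[x0 xt].
  have [H1 H2] := cont_at x0.
  by apply: H => //; exact: cvg_id.
- apply: H.
  + exact: cvg_at_right_filter (cvg_id).
  + by move=> k; exact: Hf.2.1.
  + by move=> k l; exact: Hf.2.2.
- apply: cvg_at_left_filter.
  have [H1 H2] := cont_at ht.
  by apply: H => //; exact: cvg_id.
Qed.

Lemma hc_const (t : R) : 0 < t -> hc t = hc 0.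
Proof.
move=> ht.
have D : forall x, x \in `]0, t[ -> is_derive x 1 hc ((fun _ => 0) x).
  by move=> x; rewrite in_itv /= => /andP[x0 _]; exact: dh.
have C : {within `[0, t], continuous hc}.
  apply: within0t => // F s0 FF _ Hg HV; exact: cvg_hc.
have [c _ E] := MVT ht D C.
by apply/eqP; rewrite -subr_eq0 E mul0r.
Qed.
Definition w (kap : R) (s : R) := g s i ^+ 2 * expR (kap * s).

Lemma dexp (kap t : R) : is_derive t 1 (fun s : R => expR (kap * s)) (expR (kap * t) * kap).
Proof.
have Hl : is_derive t 1 (fun s : R => kap * s) kap.
  by apply: is_derive_eq; rewrite sE mulr1.
exact: (is_derive1_comp (is_derive_expR (kap * t)) Hl).
Qed.

Lemma dw (kap t : R) : 0 < t ->
  is_derive t 1 (w kap) ((8 * C1 t + kap) * g t i ^+ 2 * expR (kap * t)).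
Proof.
move=> ht.
have H := is_deriveM (is_deriveM (dg ht) (dg ht)) (dexp kap t).
have -> : w kap = ((fun s => g s i) * (fun s => g s i)) * (fun s => expR (kap * s)).
  by apply/funext => s; rewrite /w /= expr2.
apply: is_derive_eq; rewrite /= ?sE.
have -> : ((fun s => g s i) * (fun s => g s i)) t = g t i * g t i by [].
ring.
Qed.

Lemma cvg_w (kap : R) (F : set_system R) (s0 : R) : Filter F -> x @[x --> F] --> s0 ->
     (forall k, g x k @[x --> F] --> g s0 k) ->
     (forall k l, V x k l @[x --> F] --> V s0 k l) ->
     w kap x @[x --> F] --> w kap s0.
Proof.
move=> FF Hx Hg HV; apply: cvgM; first exact: cvg_gsq.
apply: (cvg_comp _ _ (cvgM (cvg_cst kap) Hx)).
exact: continuous_expR.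
Qed.
Lemma bndC1 (t : R) : 0 < t -> exists K : R,
  forall s, s \in `[0, t] -> `|C1 s| <= K.
Proof.
move=> ht.
have Cc : {within `[0, t], continuous (fun s => `|C1 s|)}.
  apply: within0t => // F s0 FF _ Hg HV; apply: cvg_norm; exact: cvg_C1.
have [c _ Hc] := EVT_max (ltW ht) Cc.
by exists `|C1 c|.
Qed.

Lemma wmono (t : R) (kap : R) : 0 < t -> 
  {within `[0, t], continuous (w kap)} /\
  (forall x, x \in `]0, t[ -> derivable (w kap) x 1) /\
  (forall x, x \in `]0, t[ -> derive1 (w kap) x = (8 * C1 x + kap) * g x i ^+ 2 * expR (kap * x)).
Proof.
move=> ht; split; last split.
- apply: within0t => // F s0 FF Hx Hg HV; exact: cvg_w.
- move=> x; rewrite in_itv /= => /andP[x0 _].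
  have H := dw kap x0; exact: ex_derive.
- move=> x; rewrite in_itv /= => /andP[x0 _].
  have H := dw kap x0; by rewrite derive1E derive_val.
Qed.

Lemma u_zero (t : R) : 0 < t -> g 0 i = 0 -> g t i = 0.
Proof.
move=> ht g0; have [K HK] := bndC1 ht.
have [Cw [Dw Ew]] := wmono (- (8 * K)) ht.
have Hs : forall x, x \in `]0, t[ -> derive1 (w (- (8 * K))) x <= 0.
  move=> x hx; rewrite Ew //.
  have : C1 x <= K.
    apply: le_trans (ler_norm _) (HK x _).
    by move: hx; rewrite !in_itv /= => /andP[/ltW -> /ltW ->].
  move=> Cx; rewrite -mulrA; apply: mulr_le0_ge0.
    lra.
  by apply: mulr_ge0; [exact: sqr_ge0|exact: expR_ge0].
have := ler0_derive1_nincr Dw Hs Cw (lexx 0) (ltW ht) (lexx t).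
rewrite {2}/w g0 expr0n /= mul0r => Hwt.
have : w (- (8 * K)) t = 0.
  apply/eqP; rewrite eq_le Hwt /w; apply: mulr_ge0; [exact: sqr_ge0|exact: expR_ge0].
rewrite /w => /eqP; rewrite mulf_eq0 [expR _ == 0]gt_eqF ?expR_gt0 // orbF sqrf_eq0.
by move/eqP.
Qed.

Lemma u_pos (t : R) : 0 < t -> g 0 i != 0 -> g t i != 0.
Proof.
move=> ht g0; have [K HK] := bndC1 ht.
have [Cw [Dw Ew]] := wmono (8 * K) ht.
have Hs : forall x, x \in `]0, t[ -> 0 <= derive1 (w (8 * K)) x.
  move=> x hx; rewrite Ew //.
  have : - K <= C1 x.
    rewrite lerNl; apply: le_trans (HK x _); first by rewrite -normrN ler_norm.
    by move: hx; rewrite !in_itv /= => /andP[/ltW -> /ltW ->].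
  move=> Cx; rewrite -mulrA; apply: mulr_ge0.
    lra.
  by apply: mulr_ge0; [exact: sqr_ge0|exact: expR_ge0].
have := ger0_derive1_ndecr Dw Hs Cw (lexx 0) (ltW ht) (lexx t).
rewrite {1}/w mulr0 expR0 mulr1 => Hwt.
apply/negP => /eqP gt0; move: Hwt; rewrite /w gt0 expr0n /= mul0r.
by rewrite leNgt lt_neqAle eq_sym sqrf_eq0 g0 sqr_ge0.
Qed.
End Flow.
End Traj.
End Helpers.

Lemma key (R : realType) (a S : R) : 0 <= S ->
  (`|a| / Num.sqrt 2 = Num.sqrt S) <-> a ^+ 2 = 2 * S.
Proof.
move=> S0.
have E : `|a| / Num.sqrt 2 = Num.sqrt (a ^+ 2 / 2).
  by rewrite sqrtrM ?sqr_ge0 // sqrtr_sqr sqrtrV.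
have P : 0 <= a ^+ 2 / 2 by rewrite divr_ge0 ?sqr_ge0.
rewrite E; split => [H|Ha].
  have : a ^+ 2 / 2 = S.
    by apply/eqP; rewrite -eqr_sqrt // H.
  by move=> <-; field.
by rewrite Ha; congr Num.sqrt; field.
Qed.

Theorem lemmaB6 (R : realType) (M N L : nat)
    (A : 'M[R]_(M, N)) (Y : 'M[R]_(M, L))
    (g : R -> 'I_N -> R) (V : R -> 'M[R]_(N, L)) (i : 'I_N) :
  grad_flow A Y g V ->
  ((`|g 0 i| / Num.sqrt 2 = rownorm (V 0) i /\ rownorm (V 0) i = 0) ->
     forall t : R, 0 < t ->
       `|g t i| / Num.sqrt 2 = rownorm (V t) i /\ rownorm (V t) i = 0) /\
  ((`|g 0 i| / Num.sqrt 2 = rownorm (V 0) i /\ 0 < rownorm (V 0) i) ->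
     forall t : R, 0 < t ->
       `|g t i| / Num.sqrt 2 = rownorm (V t) i /\ 0 < rownorm (V t) i).
Proof.
move=> Hf.
have S0 : forall s, 0 <= \sum_(l < L) V s i l ^+ 2.
  by move=> s; apply: sumr_ge0 => l _; exact: sqr_ge0.
have cons : forall t, 0 < t ->
    `|g 0 i| / Num.sqrt 2 = rownorm (V 0) i ->
    g t i ^+ 2 = 2 * \sum_(l < L) V t i l ^+ 2.
  move=> t ht; rewrite /rownorm key // => H0.
  have := hc_const i Hf ht; rewrite /hc H0 subrr => /eqP.
  by rewrite subr_eq0 => /eqP.
have first : forall t, 0 < t ->
    `|g 0 i| / Num.sqrt 2 = rownorm (V 0) i ->
    `|g t i| / Num.sqrt 2 = rownorm (V t) i.
  by move=> t ht H0; rewrite /rownorm key //; exact: cons.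
split.
  move=> [H0 R0] t ht; split; first exact: first.
  have g0 : g 0 i = 0.
    move: H0; rewrite R0 => /eqP; rewrite mulf_eq0 invr_eq0 normr_eq0.
    by rewrite sqrtr_eq0 [2 <= 0]leNgt ltr0n orbF => /eqP.
  have gt := u_zero Hf ht g0.
  have := cons t ht H0; rewrite gt expr0n /= => /esym/eqP.
  rewrite mulf_eq0 pnatr_eq0 /= => /eqP E.
  by rewrite /rownorm E sqrtr0.
move=> [H0 P0] t ht; split; first exact: first.
have g0 : g 0 i != 0.
  apply/eqP => g0; move: H0; rewrite g0 normr0 mul0r => E.
  by move: P0; rewrite -E ltxx.
have gt := u_pos Hf ht g0.
have := cons t ht H0 => E.
rewrite /rownorm sqrtr_gt0.
have : 0 < g t i ^+ 2 by rewrite exprn_even_gt0.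
rewrite E; lra.
Qed.
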